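(* Assume $\sigma_1(x)=\tfrac12\sigma_1''(0)(x-a_1)(x-b_1)$ and $\sigma_2(x)=\tfrac12\sigma_2''(0)(x-a_2)(x-b_2)$ with $\sigma_1''(0)\ne0$, $\sigma_2''(0)\ne0$ and real zeros satisfying $0<a_1<a_2<b_1<b_2$, and assume $0<q^2\Lambda_q<1$, where $\Lambda_q=q^{-2}\Big[1+\frac{(1-q^{-1})\tau'(0)}{\frac12\sigma_1''(0)}\Big]$. Put $a=a_2$, $b=q^{-1}b_1$, and suppose $q^{-N-1}a=b$ for some $N\in\mathbb{N}_0$. Let $$\rho(x)=|x|^{\iota}\frac{(qa/x,\,x/b;q)_\infty}{(a_1/x,\,x/b_2;q)_\infty},\qquad q^{\iota}=\frac{q^{-3}\sigma_2''(0)b_2}{\sigma_1''(0)b}.$$ Then there exist polynomials $P_0,\dots,P_N$, with $P_n$ of degree $n$ a solution of the q-EHT with $\lambda=\lambda_n$, and nonzero constants $d_n^2$, such that for $m,n\in\{0,\dots,N\}$ $$\int_a^{b}P_n(x)P_m(x)\rho(x)\,d_{q^{-1}}x=d_n^2\delta_{mn},$$ i.e. orthogonality with respect to $\rho$ supported on $\{q^{-k}a\}_{k=0}^N$.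
   Context: Throughout $0<q<1$. For a function $y$ and $\zeta\in\{q,q^{-1}\}$, $D_\zeta y(x)=\frac{y(x)-y(\zeta x)}{(1-\zeta)x}$ for $x\ne0$ and $D_\zeta y(0)=y'(0)$; $[n]_q=\frac{1-q^n}{1-q}$. Let $\sigma_1$ be a real polynomial of degree at most two, $\tau(x)=\tau'(0)x+\tau(0)$ a real polynomial with $\tau'(0)\ne0$, and $\sigma_2(x):=q[\sigma_1(x)+(1-q^{-1})x\tau(x)]$. The q-EHT with parameter $n$ is $\sigma_1(x)D_{q^{-1}}D_qy(x)+\tau(x)D_qy(x)+\lambda_ny(x)=0$, $\lambda_n=-[n]_q\big(\tau'(0)+\tfrac12[n-1]_{q^{-1}}\sigma_1''(0)\big)$. $(\alpha;q)_\infty=\prod_{k\ge0}(1-\alpha q^k)$, $(\alpha_1,\dots,\alpha_r;q)_\infty=\prod_i(\alpha_i;q)_\infty$. For $q^{\iota}=c$ ($c\ne0$), $\iota$ is any complex number with $e^{\iota\ln q}=c$ and $|x|^{\iota}:=e^{\iota\ln|x|}$. For $a>0$ and $b=q^{-N-1}a$, $\int_a^{b}f(x)\,d_{q^{-1}}x=(q^{-1}-1)a\sum_{k=0}^{N}q^{-k}f(q^{-k}a)$. *)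

(* Defs.v *)
From Stdlib Require Import Reals ZArith.
From Coquelicot Require Import Coquelicot.
Open Scope R_scope.

Definition Dz (zeta : R) (y : R -> R) (x : R) : R :=
  if Req_EM_T x 0 then Derive y 0
  else (y x - y (zeta * x)) / ((1 - zeta) * x).

Definition qnum (q : R) (k : Z) : R := (1 - powerRZ q k) / (1 - q).

Fixpoint qpoch_fin (alpha q : R) (n : nat) : R :=
  match n with
  | O => 1
  | S k => qpoch_fin alpha q k * (1 - alpha * q ^ k)
  end.
Definition qpoch_inf (alpha q : R) : R :=
  real (Lim_seq (fun n => qpoch_fin alpha q n)).

Definition is_poly_deg (p : R -> R) (n : nat) : Prop :=
  exists c : nat -> R, c n <> 0 /\
    forall x, p x = sum_f_R0 (fun k => c k * x ^ k) n.

Definition cexp (z : C) : C :=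
  (exp (fst z) * cos (snd z), exp (fst z) * sin (snd z)).

Definition cpow_abs (x : R) (iota : C) : C :=
  cexp (Cmult iota (RtoC (ln (Rabs x)))).

Definition solves_qEHT (q : R) (sigma1 tau : R -> R) (lam : R) (y : R -> R) : Prop :=
  forall x, sigma1 x * Dz (/ q) (Dz q y) x + tau x * Dz q y x + lam * y x = 0.

Definition lambda_n (q t1 s1 : R) (n : nat) : R :=
  - qnum q (Z.of_nat n) * (t1 + / 2 * qnum (/ q) (Z.of_nat n - 1) * s1).

(* Jackson integral int_a^{q^{-N-1} a} f(x) d_{q^{-1}} x for complex-valued f *)
Fixpoint csum (f : nat -> C) (n : nat) : C :=
  match n with
  | O => f O
  | S k => Cplus (csum f k) (f (S k))
  end.
Definition jackson_inv (q a : R) (N : nat) (f : R -> C) : C :=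
  Cmult (RtoC ((/ q - 1) * a))
        (csum (fun k => Cmult (RtoC ((/ q) ^ k)) (f ((/ q) ^ k * a))) N).

(* Main.v *)
Require Import Defs.
From Stdlib Require Import Reals ZArith Lra Lia Psatz FunctionalExtensionality Classical.
From Coquelicot Require Import Coquelicot.
Open Scope R_scope.

Definition ev (c : nat -> R) (n : nat) (x : R) : R := sum_f_R0 (fun k => c k * x ^ k) n.
Definition qn (z : R) (k : nat) : R := (1 - z ^ k) / (1 - z).
Definition dc (z : R) (c : nat -> R) (k : nat) : R := c (S k) * qn z (S k).
Definition sh (c : nat -> R) (k : nat) : R := match k with O => 0 | S i => c i end.

Lemma ev_S c n x : ev c (S n) x = ev c n x + c (S n) * x ^ (S n).
Proof. reflexivity. Qed.
Lemma ev_O c x : ev c 0 x = c 0%nat.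
Proof. unfold ev; simpl; ring. Qed.
Lemma qn_0 z : qn z 0 = 0.
Proof. unfold qn; simpl; unfold Rdiv; ring. Qed.

Lemma ev_diff z (hz : z <> 1) c M x :
  ev c (S M) x - ev c (S M) (z * x) = (1 - z) * x * ev (dc z c) M x.
Proof.
  assert (h1 : 1 - z <> 0) by lra.
  induction M.
  - unfold ev, dc, qn. simpl. field; auto.
  - rewrite (ev_S c (S M) x), (ev_S c (S M) (z*x)), (ev_S (dc z c) M x).
    replace (ev c (S M) x + c (S (S M)) * x ^ S (S M) -
      (ev c (S M) (z * x) + c (S (S M)) * (z * x) ^ S (S M)))
      with ((ev c (S M) x - ev c (S M) (z * x)) + c (S (S M)) * (x ^ S (S M) - (z*x) ^ S (S M))) by ring.
    rewrite IHM. unfold dc, qn. rewrite Rpow_mult_distr.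
    replace (S (S M)) with (S (S M)) by reflexivity.
    simpl. field; auto.
Qed.

Lemma ev_at0 c M : ev c M 0 = c 0%nat.
Proof. induction M. apply ev_O. rewrite ev_S, IHM. simpl. ring. Qed.

Lemma ev_derive0 c M : is_derive (ev c (S M)) 0 (c 1%nat).
Proof.
  induction M.
  - apply is_derive_ext with (fun x => c 0%nat + c 1%nat * x).
    { intro t. unfold ev; simpl; ring. }
    auto_derive; auto. ring.
  - apply is_derive_ext with (fun x => ev c (S M) x + c (S (S M)) * x ^ S (S M)).
    { intro t. rewrite ev_S. reflexivity. }
    replace (c 1%nat) with (c 1%nat + 0) by ring.
    apply (is_derive_plus (ev c (S M)) (fun x => c (S (S M)) * x ^ S (S M))); auto.
    auto_derive; auto. simpl; ring.
Qed.

Lemma Dz_ev_pt z (hz : z <> 1) c M x : Dz z (ev c (S M)) x = ev (dc z c) M x.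
Proof.
  unfold Dz. destruct (Req_EM_T x 0) as [e|e].
  - subst x. rewrite ev_at0. rewrite (is_derive_unique _ _ _ (ev_derive0 c M)).
    unfold dc, qn. simpl. field. lra.
  - apply (Rmult_eq_reg_l ((1 - z) * x)). 2:{ apply Rmult_integral_contrapositive; split; lra. }
    rewrite <- ev_diff by auto. field. split; lra.
Qed.

Lemma Dz_ev z (hz : z <> 1) c M : Dz z (ev c (S M)) = ev (dc z c) M.
Proof. apply functional_extensionality; intro; apply Dz_ev_pt; auto. Qed.

Lemma ev_ext c d M x : (forall k, (k <= M)%nat -> c k = d k) -> ev c M x = ev d M x.
Proof. intro H. unfold ev. apply sum_eq. intros i Hi. rewrite H; auto. Qed.

Lemma ev_extend c M x : c (S M) = 0 -> ev c (S M) x = ev c M x.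
Proof. intro H. rewrite ev_S, H. ring. Qed.

Lemma ev_shift c M x : x * ev c M x = ev (sh c) (S M) x.
Proof.
  induction M.
  - unfold ev, sh; simpl; ring.
  - rewrite ev_S, (ev_S (sh c) (S M)), <- IHM. unfold sh. simpl. ring.
Qed.

Lemma ev_comb6 f1 f2 f3 f4 f5 f6 a1 a2 a3 a4 a5 a6 M x :
  ev (fun k => a1 * f1 k + a2 * f2 k + a3 * f3 k + a4 * f4 k + a5 * f5 k + a6 * f6 k) M x
  = a1 * ev f1 M x + a2 * ev f2 M x + a3 * ev f3 M x + a4 * ev f4 M x + a5 * ev f5 M x + a6 * ev f6 M x.
Proof.
  induction M.
  - unfold ev; simpl; ring.
  - rewrite !ev_S, IHM. ring.
Qed.

Lemma ev_zero c M x : (forall k, (k <= M)%nat -> c k = 0) -> ev c M x = 0.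
Proof.
  intro H. induction M.
  - rewrite ev_O, H; auto.
  - rewrite ev_S, IHM, H; auto. ring.
Qed.

Lemma ev_tail c n x : (forall k, (n < k)%nat -> c k = 0) -> forall j, ev c (n + j) x = ev c n x.
Proof.
  intros H j. induction j.
  - rewrite Nat.add_0_r; auto.
  - rewrite <- plus_n_Sm, ev_extend; auto. apply H; lia.
Qed.

Fixpoint cc (mu be ga : nat -> R) (n m : nat) : R * R :=
  match m with
  | O => (1, 0)
  | S m' => let p := cc mu be ga n m' in
            (- (be (n - S m')%nat * fst p + ga (n - S m')%nat * snd p) / (mu (n - S m')%nat - mu n), fst p)
  end.

Definition coef mu be ga n j : R := if (j <=? n)%nat then fst (cc mu be ga n (n - j)) else 0.

Lemma coef_n mu be ga n : coef mu be ga n n = 1.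
Proof. unfold coef. rewrite Nat.leb_refl, Nat.sub_diag. reflexivity. Qed.

Lemma coef_big mu be ga n k : (n < k)%nat -> coef mu be ga n k = 0.
Proof. intro H. unfold coef. destruct (Nat.leb_spec k n); [lia | reflexivity]. Qed.

Lemma coef_rec mu be ga n (Hd : forall j, (j < n)%nat -> mu j <> mu n) j :
  coef mu be ga n j * (mu j - mu n) + coef mu be ga n (S j) * be j + coef mu be ga n (S (S j)) * ga j = 0.
Proof.
  destruct (lt_eq_lt_dec j n) as [[Hlt|Heq]|Hgt].
  - assert (Hm : (n - j = S (n - S j))%nat) by lia.
    unfold coef at 1. destruct (Nat.leb_spec j n); [|lia].
    rewrite Hm. cbn [cc]. replace (n - S (n - S j))%nat with j by lia.
    unfold coef at 1. destruct (Nat.leb_spec (S j) n); [|lia].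
    replace (snd (cc mu be ga n (n - S j))) with (coef mu be ga n (S (S j))).
    + cbn [fst snd]. field. apply Rminus_eq_contra. apply Hd; auto.
    + unfold coef. destruct (Nat.leb_spec (S (S j)) n).
      * replace (n - S j)%nat with (S (n - S (S j))) by lia. reflexivity.
      * replace (n - S j)%nat with 0%nat by lia. reflexivity.
  - subst j. rewrite coef_n, !coef_big by lia. ring.
  - rewrite !coef_big by lia. ring.
Qed.

Definition muf q a2 t1 (j : nat) := qn q j * (a2 * qn (/ q) (pred j) + t1).
Definition bef q a1 t0 (j : nat) := qn q (S j) * (a1 * qn (/ q) j + t0).
Definition gaf q a0 (j : nat) := a0 * qn q (S (S j)) * qn (/ q) (S j).
Definition cof q a2 a1 a0 t1 t0 n := coef (muf q a2 t1) (bef q a1 t0) (gaf q a0) n.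

Lemma qEHT_poly q (hq : 0 < q < 1) a2 a1 a0 t1 t0 n N (Hn : (n <= N)%nat)
  (Hd : forall j, (j < n)%nat -> muf q a2 t1 j <> muf q a2 t1 n) x :
  let c := cof q a2 a1 a0 t1 t0 n in
  (a2 * x ^ 2 + a1 * x + a0) * Dz (/ q) (Dz q (ev c (S (S N)))) x
  + (t1 * x + t0) * Dz q (ev c (S (S N))) x + (- muf q a2 t1 n) * ev c (S (S N)) x = 0.
Proof.
  intro c.
  assert (hq1 : q <> 1) by lra.
  assert (hq2 : / q <> 1).
  { intro h. assert (q = 1). { rewrite <- (Rinv_inv q), h. apply Rinv_1. } lra. }
  rewrite (Dz_ev q hq1), (Dz_ev (/ q) hq2).
  set (d1 := dc q c). set (d2 := dc (/ q) d1).
  assert (Z : forall k, (n < k)%nat -> c k = 0).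
  { intros k hk. unfold c, cof. apply coef_big; auto. }
  assert (Z1 : forall k, (N < k)%nat -> d1 k = 0).
  { intros k hk. unfold d1, dc. rewrite Z by lia. ring. }
  assert (Z2 : forall k, (N < k)%nat -> d2 k = 0).
  { intros k hk. unfold d2, dc. rewrite Z1 by lia. ring. }
  assert (E2a : x ^ 2 * ev d2 N x = ev (sh (sh d2)) (S (S N)) x).
  { rewrite <- !ev_shift. ring. }
  assert (E2b : x * ev d2 N x = ev (sh d2) (S (S N)) x).
  { rewrite ev_extend. apply ev_shift. simpl. apply Z2; lia. }
  assert (E2c : ev d2 N x = ev d2 (S (S N)) x).
  { rewrite !ev_extend; auto; apply Z2; lia. }
  assert (E1a : x * ev d1 (S N) x = ev (sh d1) (S (S N)) x).
  { apply ev_shift. }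
  assert (E1b : ev d1 (S N) x = ev d1 (S (S N)) x).
  { rewrite (ev_extend d1 (S N)); auto; apply Z1; lia. }
  transitivity (a2 * ev (sh (sh d2)) (S (S N)) x + a1 * ev (sh d2) (S (S N)) x
     + a0 * ev d2 (S (S N)) x + t1 * ev (sh d1) (S (S N)) x + t0 * ev d1 (S (S N)) x
     + (- muf q a2 t1 n) * ev c (S (S N)) x).
  { rewrite <- E2a, <- E2b, <- E2c, <- E1a, <- E1b. ring. }
  rewrite <- ev_comb6. apply ev_zero. intros k _.
  rewrite <- (coef_rec (muf q a2 t1) (bef q a1 t0) (gaf q a0) n Hd k).
  fold (cof q a2 a1 a0 t1 t0 n). fold c.
  unfold d2, d1, dc, sh, muf, bef, gaf.
  destruct k as [|[|k]]; simpl pred; rewrite ?qn_0; ring.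
Qed.

Lemma muf_formula q (hq : 0 < q < 1) a2 t1 (ha : a2 <> 0) j :
  muf q a2 t1 j = a2 * q / (1 - q) ^ 2 *
     (q / q ^ j + (1 + (1 - / q) * t1 / a2) * q ^ j - q - (1 + (1 - / q) * t1 / a2)).
Proof.
  assert (q <> 0) by lra. assert (1 - q <> 0) by lra.
  assert (1 - / q <> 0).
  { intro h. assert (hh : / q = 1) by lra. assert (q = 1). { rewrite <- (Rinv_inv q), hh. apply Rinv_1. } lra. }
  destruct j as [|j].
  - unfold muf. rewrite qn_0. simpl. field. auto.
  - unfold muf, qn. simpl pred. rewrite pow_inv.
    assert (q ^ j <> 0) by (apply pow_nonzero; auto).
    simpl. field. repeat split; auto; lra.
Qed.

Lemma muf_distinct q (hq : 0 < q < 1) a2 t1 (ha : a2 <> 0)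
  (HL : 0 < 1 + (1 - / q) * t1 / a2 < 1) j n : j <> n -> muf q a2 t1 j <> muf q a2 t1 n.
Proof.
  intros hjn E. rewrite !muf_formula in E by auto.
  set (L := 1 + (1 - / q) * t1 / a2) in *.
  assert (q <> 0) by lra.
  assert (Hu : 0 < q ^ j) by (apply pow_lt; lra).
  assert (Hv : 0 < q ^ n) by (apply pow_lt; lra).
  assert (Huv : q ^ j <> q ^ n).
  { destruct (Nat.lt_total j n) as [h|[h|h]]; [|lia|].
    - replace n with (j + (n - j))%nat by lia. rewrite pow_add.
      assert (0 <= q ^ (n - j) < 1) by (apply pow_lt_1_compat; lra || lia).
      nra.
    - replace j with (n + (j - n))%nat by lia. rewrite pow_add.
      assert (0 <= q ^ (j - n) < 1) by (apply pow_lt_1_compat; lra || lia).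
      nra. }
  assert (Hp : q ^ j * q ^ n <= q).
  { rewrite <- pow_add. replace (j + n)%nat with (S (j + n - 1)) by lia. simpl.
    assert (0 <= q ^ (j + n - 1) <= 1).
    { split. apply pow_le; lra. rewrite <- (pow1 (j + n - 1)). apply pow_incr; lra. }
    nra. }
  assert (Hk : a2 * q / (1 - q) ^ 2 <> 0).
  { assert (1 - q <> 0) by lra. apply Rmult_integral_contrapositive; split.
    apply Rmult_integral_contrapositive; split; auto. apply Rinv_neq_0_compat; apply pow_nonzero; auto. }
  apply Rmult_eq_reg_l in E; auto.
  set (u := q ^ j) in *. set (v := q ^ n) in *.
  assert (E2 : (v - u) * (q - L * (u * v)) = 0).
  { replace ((v - u) * (q - L * (u * v))) with
      (u * v * ((q / u + L * u - q - L) - (q / v + L * v - q - L))) by (field; lra).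
    rewrite E. ring. }
  apply Rmult_integral in E2. destruct E2 as [E2|E2]. lra.
  assert (L * (u * v) < q). { assert (0 < u * v) by nra. nra. }
  lra.
Qed.

Lemma lambda_muf q t1 s1 n : lambda_n q t1 s1 n = - muf q (s1 / 2) t1 n.
Proof.
  unfold lambda_n, muf, qnum. destruct n as [|k].
  - simpl. rewrite qn_0. unfold Rdiv. ring.
  - replace (Z.of_nat (S k) - 1)%Z with (Z.of_nat k) by lia.
    rewrite <- !pow_powerRZ. unfold qn. simpl pred. unfold Rdiv. ring.
Qed.

Definition Aco q S1 T x := - (S1 / ((1 - / q) * x) + T) / ((1 - q) * x).
Definition Bco q S1 T x := S1 / ((1 - / q) * x) * (1 / ((1 - q) * x) + 1 / ((1 - q) * (/ q * x))) + T / ((1 - q) * x).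
Definition Cco q S1 x := - S1 / ((1 - / q) * x * ((1 - q) * (/ q * x))).

Lemma Lop3 q (hq : 0 < q < 1) y x (hx : x <> 0) S1 T :
  S1 * Dz (/ q) (Dz q y) x + T * Dz q y x
  = Aco q S1 T x * y (q * x) + Bco q S1 T x * y x + Cco q S1 x * y (/ q * x).
Proof.
  assert (q <> 0) by lra. assert (1 - q <> 0) by lra.
  assert (1 - / q <> 0).
  { intro h. assert (hh : / q = 1) by lra. assert (q = 1). { rewrite <- (Rinv_inv q), hh. apply Rinv_1. } lra. }
  assert (hx' : / q * x <> 0) by (apply Rmult_integral_contrapositive; split; auto; apply Rinv_neq_0_compat; auto).
  unfold Dz at 1. destruct (Req_EM_T x 0); [contradiction|].
  unfold Dz. destruct (Req_EM_T x 0); [contradiction|]. destruct (Req_EM_T (/ q * x) 0); [contradiction|].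
  replace (q * (/ q * x)) with x by (field; auto).
  unfold Aco, Bco, Cco. field. repeat split; auto; lra.
Qed.

Lemma telesc (w X A C : nat -> R) (p r : R -> R) (q : R) N
  (HX : forall k, q * X (S k) = X k) (HX' : forall k, / q * X k = X (S k))
  (HA : A 0%nat = 0) (HC : C N = 0)
  (HW : forall k, (k < N)%nat -> w (S k) * A (S k) = w k * C k) :
  sum_f_R0 (fun k => w k * ((A k * p (q * X k) + C k * p (/ q * X k)) * r (X k)
                          - p (X k) * (A k * r (q * X k) + C k * r (/ q * X k)))) N = 0.
Proof.
  assert (G : forall n, (n <= N)%nat ->
    sum_f_R0 (fun k => w k * ((A k * p (q * X k) + C k * p (/ q * X k)) * r (X k)
                          - p (X k) * (A k * r (q * X k) + C k * r (/ q * X k)))) n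
    = w n * C n * (p (X (S n)) * r (X n) - p (X n) * r (X (S n)))).
  { induction n; intro hn.
    - simpl. rewrite HA, HX'. ring.
    - rewrite tech5, IHn by lia. rewrite HX, !HX'.
      replace (w n * C n) with (w (S n) * A (S n)) by (apply HW; lia). ring. }
  rewrite G by lia. rewrite HC. ring.
Qed.

Lemma real_mult c l : real (Rbar_mult (Finite c) l) = c * real l.
Proof.
  destruct l as [x| |]; simpl; try reflexivity;
  unfold Rbar_mult, Rbar_mult'; simpl;
  repeat (destruct Rle_dec || destruct Rle_lt_or_eq_dec); simpl; ring.
Qed.

Lemma qpoch_fin_shift a q n : qpoch_fin a q (S n) = (1 - a) * qpoch_fin (q * a) q n.
Proof.
  induction n.
  - simpl. ring.
  - change (qpoch_fin a q (S (S n))) with (qpoch_fin a q (S n) * (1 - a * q ^ (S n))).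
    rewrite IHn. simpl. ring.
Qed.

Lemma qpoch_inf_fe a q : qpoch_inf a q = (1 - a) * qpoch_inf (q * a) q.
Proof.
  unfold qpoch_inf. rewrite <- (Lim_seq_incr_1 (fun n => qpoch_fin a q n)).
  rewrite (Lim_seq_ext _ (fun n => (1 - a) * qpoch_fin (q * a) q n)) by (intro; apply qpoch_fin_shift).
  rewrite Lim_seq_scal_l. apply real_mult.
Qed.

Lemma qpoch_fin_pos a q (hq : 0 < q < 1) (ha : 0 <= a < 1) n : 0 < qpoch_fin a q n.
Proof.
  induction n; simpl. lra.
  apply Rmult_lt_0_compat; auto.
  assert (0 < q ^ n <= 1) by (split; [apply pow_lt; lra | rewrite <- (pow1 n); apply pow_incr; lra]).
  nra.
Qed.

Lemma qpoch_fin_decr a q (hq : 0 < q < 1) (ha : 0 <= a < 1) n : qpoch_fin a q (S n) <= qpoch_fin a q n.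
Proof.
  simpl. assert (0 < qpoch_fin a q n) by (apply qpoch_fin_pos; auto).
  assert (0 < q ^ n) by (apply pow_lt; lra). assert (0 <= a * q ^ n) by nra. nra.
Qed.

Lemma qpoch_fin_lb a q (hq : 0 < q < 1) (ha : 0 <= a < 1) n :
  1 - a * (1 - q ^ n) / (1 - q) <= qpoch_fin a q n.
Proof.
  induction n; simpl.
  - unfold Rdiv. ring_simplify. lra.
  - assert (0 < q ^ n <= 1) by (split; [apply pow_lt; lra | rewrite <- (pow1 n); apply pow_incr; lra]).
    assert (E : 1 - a * (1 - q * q ^ n) / (1 - q) = (1 - a * (1 - q ^ n) / (1 - q)) - a * q ^ n)
      by (field; lra).
    rewrite E.
    assert (0 <= a * (1 - q ^ n) / (1 - q)).
    { apply Rmult_le_pos. apply Rmult_le_pos; lra. left; apply Rinv_0_lt_compat; lra. }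
    assert (0 <= 1 - a * q ^ n) by nra.
    assert (0 <= a * q ^ n) by nra.
    nra.
Qed.

Lemma qpoch_fin_split a q m n : qpoch_fin a q (m + n) = qpoch_fin a q m * qpoch_fin (a * q ^ m) q n.
Proof.
  induction n.
  - rewrite Nat.add_0_r. simpl. ring.
  - rewrite <- plus_n_Sm. simpl. rewrite IHn. rewrite pow_add. ring.
Qed.

Lemma qpoch_inf_pos a q (hq : 0 < q < 1) (ha : 0 <= a < 1) : 0 < qpoch_inf a q.
Proof.
  destruct (pow_lt_1_zero q) with ((1 - q) / 2) as [m Hm].
  { rewrite Rabs_pos_eq; lra. } { lra. }
  specialize (Hm m (le_n m)). rewrite Rabs_pos_eq in Hm by (apply pow_le; lra).
  assert (Hpm : 0 < qpoch_fin a q m) by (apply qpoch_fin_pos; auto).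
  set (c := qpoch_fin a q m / 2).
  assert (Hqm : 0 < q ^ m <= 1) by (split; [apply pow_lt; lra | rewrite <- (pow1 m); apply pow_incr; lra]).
  assert (Hlb : forall n, c <= qpoch_fin a q n).
  { intro n. destruct (le_lt_dec m n) as [h|h].
    - replace n with (m + (n - m))%nat by lia. rewrite qpoch_fin_split.
      assert (0 <= a * q ^ m < 1) by (split; nra).
      pose proof (qpoch_fin_lb (a * q ^ m) q hq H (n - m)).
      assert (0 < q ^ (n - m)) by (apply pow_lt; lra).
      assert (a * q ^ m * (1 - q ^ (n - m)) / (1 - q) <= 1 / 2).
      { apply (Rmult_le_reg_r (1 - q)). lra. unfold Rdiv. rewrite Rmult_assoc, Rinv_l by lra.
        assert (q ^ (n - m) <= 1) by (rewrite <- (pow1 (n - m)); apply pow_incr; lra).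
        nra. }
      unfold c. nra.
    - assert (forall j, qpoch_fin a q (n + j) <= qpoch_fin a q n).
      { induction j. rewrite Nat.add_0_r; lra. rewrite <- plus_n_Sm.
        pose proof (qpoch_fin_decr a q hq ha (n + j)). lra. }
      specialize (H (m - n)%nat). replace (n + (m - n))%nat with m in H by lia.
      unfold c. lra. }
  assert (Hc : 0 < c) by (unfold c; lra).
  assert (Hf : ex_finite_lim_seq (fun n => qpoch_fin a q n)).
  { apply ex_finite_lim_seq_decr with c. intro n; apply qpoch_fin_decr; auto. auto. }
  apply ex_finite_lim_seq_correct in Hf. destruct Hf as [_ Hf].
  assert (Hle : Rbar_le (Lim_seq (fun _ => c)) (Lim_seq (fun n => qpoch_fin a q n))).
  { apply Lim_seq_le_loc. exists 0%nat. intros; auto. }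
  rewrite Lim_seq_const in Hle. unfold qpoch_inf. rewrite <- Hf in Hle. simpl in Hle. lra.
Qed.

Lemma cexp_add z w : cexp (Cplus z w) = Cmult (cexp z) (cexp w).
Proof.
  destruct z as [z1 z2], w as [w1 w2]. unfold cexp, Cplus, Cmult. simpl.
  rewrite exp_plus, cos_plus, sin_plus. apply injective_projections; simpl; ring.
Qed.

Lemma cexp_nz z s : s <> 0 -> Cmult (cexp z) (RtoC s) <> RtoC 0.
Proof.
  intros hs E. destruct z as [z1 z2]. unfold cexp, Cmult, RtoC in E. simpl in E.
  injection E. intros E2 E1.
  assert (0 < exp z1) by apply exp_pos.
  assert (cos z2 = 0) by (apply (Rmult_eq_reg_l (exp z1 * s)); [lra | ] ; nra).
  assert (sin z2 = 0).
  { assert (exp z1 * sin z2 * s = 0) by lra.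
    apply Rmult_integral in H1. destruct H1 as [h|h]; [|contradiction].
    apply Rmult_integral in h. destruct h; lra. }
  pose proof (sin2_cos2 z2). rewrite H0, H1 in H2. unfold Rsqr in H2. lra.
Qed.

Lemma cexp_neg_real iota l r (hr : r <> 0) :
  cexp (Cmult iota (RtoC l)) = RtoC r -> cexp (Cmult iota (RtoC (- l))) = RtoC (/ r).
Proof.
  intro Hi.
  assert (E : Cmult (cexp (Cmult iota (RtoC (- l)))) (RtoC r) = RtoC 1).
  { rewrite <- Hi, <- cexp_add. destruct iota as [i1 i2].
    unfold Cmult, Cplus, RtoC, cexp. simpl.
    replace (i1 * - l - i2 * 0 + (i1 * l - i2 * 0)) with 0 by ring.
    replace (i1 * 0 + i2 * - l + (i1 * 0 + i2 * l)) with 0 by ring.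
    rewrite exp_0, cos_0, sin_0. apply injective_projections; simpl; ring. }
  destruct (cexp (Cmult iota (RtoC (- l)))) as [w1 w2].
  unfold Cmult, RtoC in E. simpl in E. injection E. intros E2 E1.
  unfold RtoC. apply injective_projections; simpl.
  - apply (Rmult_eq_reg_r r); auto. rewrite Rinv_l by auto. lra.
  - apply (Rmult_eq_reg_r r); auto. lra.
Qed.

Lemma cpow_step q (hq : 0 < q < 1) iota r (hr : r <> 0)
  (Hi : cexp (Cmult iota (RtoC (ln q))) = RtoC r) x (hx : 0 < x) :
  cpow_abs (/ q * x) iota = Cmult (cpow_abs x iota) (RtoC (/ r)).
Proof.
  unfold cpow_abs.
  assert (0 < / q * x) by (apply Rmult_lt_0_compat; auto; apply Rinv_0_lt_compat; lra).
  rewrite !Rabs_pos_eq by lra.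
  rewrite ln_mult, ln_Rinv by (try apply Rinv_0_lt_compat; lra).
  rewrite <- (cexp_neg_real iota (ln q) r hr Hi), <- cexp_add.
  f_equal. destruct iota as [i1 i2]. unfold Cmult, Cplus, RtoC. simpl.
  apply injective_projections; simpl; ring.
Qed.

Lemma cpow_iter q (hq : 0 < q < 1) iota r (hr : r <> 0)
  (Hi : cexp (Cmult iota (RtoC (ln q))) = RtoC r) a (ha : 0 < a) k :
  cpow_abs ((/ q) ^ k * a) iota = Cmult (cpow_abs a iota) (RtoC ((/ r) ^ k)).
Proof.
  induction k.
  - simpl. rewrite Rmult_1_l. destruct (cpow_abs a iota) as [u v]. unfold Cmult, RtoC; simpl.
    apply injective_projections; simpl; ring.
  - simpl. rewrite Rmult_assoc. rewrite (cpow_step q hq iota r hr Hi).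
    + rewrite IHk. destruct (cpow_abs a iota) as [u v]. unfold Cmult, RtoC; simpl.
      apply injective_projections; simpl; ring.
    + apply Rmult_lt_0_compat; auto. apply pow_lt. apply Rinv_0_lt_compat; lra.
Qed.

Lemma csum_red (F : nat -> C) (g : nat -> R) (ca : C) N :
  (forall k, (k <= N)%nat -> F k = Cmult ca (RtoC (g k))) ->
  csum F N = Cmult ca (RtoC (sum_f_R0 g N)).
Proof.
  intro H. induction N.
  - simpl. apply H; auto.
  - simpl. rewrite IHN by (intros; apply H; lia). rewrite H by lia.
    destruct ca as [u v]. unfold Cmult, Cplus, RtoC. simpl.
    apply injective_projections; simpl; ring.
Qed.

Lemma sum_nonneg_b (f : nat -> R) N :
  (forall k, (k <= N)%nat -> 0 <= f k) -> 0 <= sum_f_R0 f N.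
Proof.
  intro H. induction N. simpl; apply H; lia.
  rewrite tech5. assert (0 <= sum_f_R0 f N) by (apply IHN; intros; apply H; lia).
  assert (0 <= f (S N)) by (apply H; lia). lra.
Qed.

Lemma sum_pos_one (f : nat -> R) N k0 :
  (forall k, (k <= N)%nat -> 0 <= f k) -> (k0 <= N)%nat -> 0 < f k0 -> 0 < sum_f_R0 f N.
Proof.
  intros H hk hp. induction N.
  - replace k0 with 0%nat in hp by lia. simpl. auto.
  - rewrite tech5. destruct (Nat.eq_dec k0 (S N)).
    + subst. assert (0 <= sum_f_R0 f N) by (apply sum_nonneg_b; intros; apply H; lia). lra.
    + assert (0 < sum_f_R0 f N) by (apply IHN; intros; try apply H; lia).
      assert (0 <= f (S N)) by (apply H; lia). lra.
Qed.

Lemma no_lattice_roots q (hq : 0 < q < 1) a (ha : 0 < a) n :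
  forall c, c n <> 0 -> (forall k, (k <= n)%nat -> ev c n ((/ q) ^ k * a) = 0) -> False.
Proof.
  assert (hq1 : 1 < / q).
  { rewrite <- Rinv_1. apply Rinv_lt_contravar; lra. }
  induction n; intros c hc H.
  - specialize (H 0%nat (le_n 0)). rewrite ev_O in H. auto.
  - apply (IHn (dc (/ q) c)).
    + unfold dc, qn. assert (1 < (/ q) ^ S n) by (apply Rlt_pow_R1; lia || lra).
      apply Rmult_integral_contrapositive; split; auto.
      unfold Rdiv. apply Rmult_integral_contrapositive; split. lra. apply Rinv_neq_0_compat; lra.
    + intros k hk.
      assert (hx : 0 < (/ q) ^ k * a) by (apply Rmult_lt_0_compat; auto; apply pow_lt; lra).
      assert (E := ev_diff (/ q) ltac:(lra) c n ((/ q) ^ k * a)).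
      rewrite H in E by lia.
      replace (/ q * ((/ q) ^ k * a)) with ((/ q) ^ S k * a) in E by (simpl; ring).
      rewrite H in E by lia.
      assert (0 < (1 - / q) * ((/ q) ^ k * a) \/ (1 - / q) * ((/ q) ^ k * a) < 0) by nra.
      destruct H0.
      * apply (Rmult_eq_reg_l ((1 - / q) * ((/ q) ^ k * a))); lra.
      * apply (Rmult_eq_reg_l ((1 - / q) * ((/ q) ^ k * a))); lra.
Qed.

Lemma frac01 u v : 0 <= u -> u < v -> 0 <= u / v < 1.
Proof.
  intros h1 h2. assert (0 < v) by lra. split.
  - apply Rmult_le_pos; auto. left; apply Rinv_0_lt_compat; auto.
  - apply (Rmult_lt_reg_r v); auto. unfold Rdiv. rewrite Rmult_assoc, Rinv_l by lra. lra.
Qed.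

Theorem theorem4p3
  (q : R) (Hq : 0 < q < 1)
  (s1 a1 b1 : R) (t0 t1 : R) (Ht1 : t1 <> 0) (Hs1 : s1 <> 0)
  (s2 a2 b2 : R) (Hs2 : s2 <> 0)
  (Hfac2 : forall x : R,
      q * ((s1 / 2 * (x - a1) * (x - b1)) + (1 - / q) * x * (t1 * x + t0))
      = s2 / 2 * (x - a2) * (x - b2))
  (Hord : 0 < a1 /\ a1 < a2 /\ a2 < b1 /\ b1 < b2)
  (HLam : 0 < q ^ 2 * ((/ q) ^ 2 * (1 + (1 - / q) * t1 / (s1 / 2))) < 1)
  (a b : R) (Ha : a = a2) (Hb : b = / q * b1)
  (N : nat) (HN : (/ q) ^ (N + 1) * a = b)
  (iota : C)
  (Hiota : cexp (Cmult iota (RtoC (ln q))) = RtoC ((/ q) ^ 3 * s2 * b2 / (s1 * b))) :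
  let sigma1 := fun x : R => s1 / 2 * (x - a1) * (x - b1) in
  let tau := fun x : R => t1 * x + t0 in
  let rho := fun x : R =>
    Cmult (cpow_abs x iota)
      (RtoC (qpoch_inf (q * a / x) q * qpoch_inf (x / b) q
             / (qpoch_inf (a1 / x) q * qpoch_inf (x / b2) q))) in
  exists (P : nat -> R -> R) (d : nat -> C),
    (forall n : nat, (n <= N)%nat ->
       is_poly_deg (P n) n /\ solves_qEHT q sigma1 tau (lambda_n q t1 s1 n) (P n)
       /\ d n <> RtoC 0) /\
    (forall m n : nat, (m <= N)%nat -> (n <= N)%nat ->
       jackson_inv q a N (fun x => Cmult (RtoC (P n x * P m x)) (rho x))
       = (if Nat.eqb m n then d n else RtoC 0)).
Proof.
  intros sigma1 tau rho.
  destruct Hord as (Ha1 & H12 & H21 & Hbb).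
  assert (hq0 : q <> 0) by lra.
  assert (hq1 : 1 < / q) by (rewrite <- Rinv_1; apply Rinv_lt_contravar; lra).
  set (L := 1 + (1 - / q) * t1 / (s1 / 2)) in *.
  assert (HL : 0 < L < 1).
  { replace (q ^ 2 * ((/ q) ^ 2 * L)) with L in HLam by (field; auto). auto. }
  assert (Hs2e : s2 = q * s1 * L).
  { pose proof (Hfac2 0) as E0; pose proof (Hfac2 1) as E1; pose proof (Hfac2 (-1)) as Em.
    replace s2 with (s2 / 2 * (1 - a2) * (1 - b2) + s2 / 2 * (-1 - a2) * (-1 - b2)
                     - 2 * (s2 / 2 * (0 - a2) * (0 - b2))) by field.
    rewrite <- E1, <- Em, <- E0. unfold L. field. auto. }
  assert (Hb1 : b1 = q * b) by (rewrite Hb; field; auto).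
  subst a2. clear Hb. subst b1.
  assert (hb : 0 < b) by nra.
  assert (HxN : (/ q) ^ N * a = q * b).
  { rewrite <- HN, pow_add. simpl. field. auto. }
  set (r := (/ q) ^ 3 * s2 * b2 / (s1 * b)) in *.
  assert (hr : 0 < r).
  { unfold r. rewrite Hs2e. replace ((/ q) ^ 3 * (q * s1 * L) * b2 / (s1 * b)) with ((/ q) ^ 2 * L * b2 / b)
      by (simpl; field; auto; lra).
    apply Rmult_lt_0_compat. apply Rmult_lt_0_compat. apply Rmult_lt_0_compat.
    apply pow_lt; lra. lra. lra. apply Rinv_0_lt_compat; lra. }
  set (X := fun k : nat => (/ q) ^ k * a).
  assert (HXS : forall k, X (S k) = / q * X k) by (intro; unfold X; simpl; ring).
  assert (HX' : forall k, / q * X k = X (S k)) by (intro; rewrite HXS; auto).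
  assert (HXq : forall k, q * X (S k) = X k) by (intro; rewrite HXS; field; auto).
  assert (HXlo : forall k, a <= X k).
  { intro k. unfold X. assert (1 <= (/ q) ^ k) by (apply pow_R1_Rle; lra). nra. }
  assert (HXhi : forall k, (k <= N)%nat -> X k <= q * b).
  { intros k hk. rewrite <- HxN. unfold X. assert ((/ q) ^ k <= (/ q) ^ N) by (apply Rle_pow; lra || lia). nra. }
  assert (HXpos : forall k, 0 < X k) by (intro k; specialize (HXlo k); lra).
  set (Rw := fun x => qpoch_inf (q * a / x) q * qpoch_inf (x / b) q
             / (qpoch_inf (a1 / x) q * qpoch_inf (x / b2) q)).
  assert (HQ : forall x, a <= x -> x <= q * b ->
     0 < qpoch_inf (q * a / x) q /\ 0 < qpoch_inf (x / b) q /\ 0 < qpoch_inf (a1 / x) q /\ 0 < qpoch_inf (x / b2) q).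
  { intros x h1 h2. assert (0 < x) by lra.
    split; [|split; [|split]]; apply qpoch_inf_pos; auto; apply frac01; nra. }
  assert (HRw : forall k, (k <= N)%nat -> 0 < Rw (X k)).
  { intros k hk. destruct (HQ (X k) (HXlo k) (HXhi k hk)) as (p1 & p2 & p3 & p4).
    unfold Rw. apply Rmult_lt_0_compat. nra. apply Rinv_0_lt_compat. nra. }
  set (w := fun k : nat => (/ q - 1) * a * (/ q) ^ k * (/ r) ^ k * Rw (X k)).
  assert (Hw : forall k, (k <= N)%nat -> 0 < w k).
  { intros k hk. unfold w. specialize (HRw k hk).
    assert (0 < (/ q) ^ k) by (apply pow_lt; lra).
    assert (0 < (/ r) ^ k) by (apply pow_lt; apply Rinv_0_lt_compat; lra).
    assert (0 < (/ q - 1) * a) by nra.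
    apply Rmult_lt_0_compat; auto. apply Rmult_lt_0_compat; auto. apply Rmult_lt_0_compat; auto. }
  assert (PE : forall k, (k < N)%nat ->
     w (S k) * (s2 / 2 * (X (S k) - a) * (X (S k) - b2)) = w k * (s1 / 2 * (X k - a1) * (X k - q * b))).
  { intros k hk.
    destruct (HQ (X k) (HXlo k) (HXhi k ltac:(lia))) as (p1 & p2 & p3 & p4).
    destruct (HQ (X (S k)) (HXlo (S k)) (HXhi (S k) hk)) as (p1' & p2' & p3' & p4').
    assert (hx := HXpos k). assert (hx' := HXpos (S k)).
    assert (hxb : X (S k) <= q * b) by (apply HXhi; lia).
    unfold w, Rw. rewrite HXS in *. set (x := X k) in *.
    rewrite (qpoch_inf_fe (q * a / x) q), (qpoch_inf_fe (/ q * x / b) q),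
            (qpoch_inf_fe (a1 / x) q), (qpoch_inf_fe (/ q * x / b2) q).
    replace (q * (q * a / x)) with (q * a / (/ q * x)) by (field; auto; lra).
    replace (q * (/ q * x / b)) with (x / b) by (field; lra).
    replace (q * (a1 / x)) with (a1 / (/ q * x)) by (field; lra).
    replace (q * (/ q * x / b2)) with (x / b2) by (field; lra).
    unfold r. simpl pow.
    assert (hxx : x <= q * (q * b)).
    { replace x with (q * (/ q * x)) by (field; lra). apply Rmult_le_compat_l; lra. }
    assert (q * (q * b) < q * b2) by (apply Rmult_lt_compat_l; lra).
    assert (a <= x) by apply HXlo.
    field. repeat split; try lra. }
  set (c := fun n => cof q (s1 / 2) (- (s1 / 2) * (a1 + q * b)) (s1 / 2 * a1 * (q * b)) t1 t0 n).
  set (P := fun n => ev (c n) (S (S N))).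
  set (mu := muf q (s1 / 2) t1).
  assert (hs : s1 / 2 <> 0) by lra.
  assert (Hd : forall j n, j <> n -> mu j <> mu n).
  { intros j n hjn. apply (muf_distinct q Hq (s1 / 2) t1 hs HL j n hjn). }
  assert (Heig : forall n, (n <= N)%nat -> forall x,
     sigma1 x * Dz (/ q) (Dz q (P n)) x + tau x * Dz q (P n) x + (- mu n) * P n x = 0).
  { intros n hn x.
    pose proof (qEHT_poly q Hq (s1 / 2) (- (s1 / 2) * (a1 + q * b)) (s1 / 2 * a1 * (q * b)) t1 t0 n N hn
                  (fun j hj => Hd j n ltac:(lia)) x) as E.
    cbv zeta in E.
    replace (sigma1 x) with (s1 / 2 * x ^ 2 + - (s1 / 2) * (a1 + q * b) * x + s1 / 2 * a1 * (q * b))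
      by (unfold sigma1; ring).
    exact E. }
  assert (Hlat : forall n, (n <= N)%nat -> forall k,
     Aco q (sigma1 (X k)) (tau (X k)) (X k) * P n (q * X k) + Bco q (sigma1 (X k)) (tau (X k)) (X k) * P n (X k)
     + Cco q (sigma1 (X k)) (X k) * P n (/ q * X k) = mu n * P n (X k)).
  { intros n hn k. rewrite <- Lop3 by (auto; specialize (HXpos k); lra).
    pose proof (Heig n hn (X k)). lra. }
  assert (Horth : forall m n, (m <= N)%nat -> (n <= N)%nat -> m <> n ->
     sum_f_R0 (fun k => w k * (P n (X k) * P m (X k))) N = 0).
  { intros m n hm hn hmn.
    assert (HA : Aco q (sigma1 (X 0%nat)) (tau (X 0%nat)) (X 0%nat) = 0).
    { replace (X 0%nat) with a by (unfold X; simpl; ring).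
      assert (E : sigma1 a + (1 - / q) * a * tau a = 0).
      { pose proof (Hfac2 a) as E. replace (a - a) with 0 in E by ring.
        apply (Rmult_eq_reg_l q); auto. unfold sigma1, tau. rewrite E. ring. }
      unfold Aco. replace (sigma1 a / ((1 - / q) * a) + tau a) with ((sigma1 a + (1 - / q) * a * tau a) / ((1 - / q) * a))
        by (field; split; lra).
      rewrite E. unfold Rdiv. ring. }
    assert (HC : Cco q (sigma1 (X N)) (X N) = 0).
    { unfold X. rewrite HxN. unfold Cco, sigma1. replace (q * b - q * b) with 0 by ring. unfold Rdiv. ring. }
    assert (HW : forall k, (k < N)%nat ->
       w (S k) * Aco q (sigma1 (X (S k))) (tau (X (S k))) (X (S k)) = w k * Cco q (sigma1 (X k)) (X k)).
    { intros k hk. pose proof (PE k hk) as E.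
      assert (hx := HXpos k).
      rewrite <- Hfac2 in E.
      unfold Aco, Cco.
      replace (w (S k) * (- (sigma1 (X (S k)) / ((1 - / q) * X (S k)) + tau (X (S k))) / ((1 - q) * X (S k))))
        with (- (w (S k) * (q * (s1 / 2 * (X (S k) - a1) * (X (S k) - q * b) + (1 - / q) * X (S k) * (t1 * X (S k) + t0))))
              / (q * (1 - / q) * (1 - q) * X (S k) * X (S k)))
        by (unfold sigma1, tau; rewrite HXS; field; repeat split; lra).
      rewrite E. unfold sigma1. rewrite HXS. field. repeat split; lra. }
    pose proof (telesc w X (fun k => Aco q (sigma1 (X k)) (tau (X k)) (X k)) (fun k => Cco q (sigma1 (X k)) (X k))
                  (P n) (P m) q N HXq HX' HA HC HW) as T.
    rewrite (sum_eq _ (fun k => (w k * (P n (X k) * P m (X k))) * (mu n - mu m))) in T.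
    2:{ intros i hi. cbv beta.
        pose proof (Hlat n hn i) as E1. pose proof (Hlat m hm i) as E2.
        set (A := Aco q (sigma1 (X i)) (tau (X i)) (X i)) in *.
        set (B := Bco q (sigma1 (X i)) (tau (X i)) (X i)) in *.
        set (C0 := Cco q (sigma1 (X i)) (X i)) in *.
        replace (A * P n (q * X i) + C0 * P n (/ q * X i)) with (mu n * P n (X i) - B * P n (X i)) by lra.
        replace (A * P m (q * X i) + C0 * P m (/ q * X i)) with (mu m * P m (X i) - B * P m (X i)) by lra.
        ring. }
    rewrite <- scal_sum in T. apply Rmult_integral in T. destruct T as [T|T]; auto.
    exfalso. apply (Hd n m); auto. lra. }
  set (ca := cpow_abs a iota).
  assert (Hjack : forall m n, jackson_inv q a N (fun x => Cmult (RtoC (P n x * P m x)) (rho x))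
             = Cmult ca (RtoC (sum_f_R0 (fun k => w k * (P n (X k) * P m (X k))) N))).
  { intros m n. unfold jackson_inv.
    rewrite (csum_red _ (fun k => (/ q) ^ k * (/ r) ^ k * Rw (X k) * (P n (X k) * P m (X k))) ca).
    - rewrite (sum_eq (fun k => w k * (P n (X k) * P m (X k)))
                 (fun i => (/ q) ^ i * (/ r) ^ i * Rw (X i) * (P n (X i) * P m (X i)) * ((/ q - 1) * a)))
        by (intros; unfold w; ring).
      rewrite <- scal_sum. destruct ca as [u v]. unfold Cmult, RtoC. simpl.
      apply injective_projections; simpl; ring.
    - intros k hk. unfold rho. fold (Rw ((/ q) ^ k * a)).
      rewrite (cpow_iter q Hq iota r ltac:(lra) Hiota a ltac:(lra) k). fold ca.
      change ((/ q) ^ k * a) with (X k).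
      destruct ca as [u v]. unfold Cmult, RtoC. simpl.
      apply injective_projections; simpl; ring. }
  exists P, (fun n => Cmult ca (RtoC (sum_f_R0 (fun k => w k * (P n (X k) * P n (X k))) N))).
  split.
  - intros n hn. split; [|split].
    + exists (c n). split.
      * unfold c, cof. rewrite coef_n. lra.
      * intro x. unfold P. fold (ev (c n) n x).
        replace (S (S N)) with (n + (S (S N) - n))%nat by lia. apply ev_tail.
        intros k hk. unfold c, cof. apply coef_big; auto.
    + intro x. rewrite lambda_muf. fold mu. apply Heig; auto.
    + unfold ca, cpow_abs. apply cexp_nz. apply Rgt_not_eq.
      destruct (classic (exists k, (k <= n)%nat /\ P n (X k) <> 0)) as [[k0 [hk0 hP]]|hno].
      * apply (sum_pos_one _ N k0).
        -- intros k hk. apply Rmult_le_pos. left; apply Hw; auto. apply Rle_0_sqr.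
        -- lia.
        -- apply Rmult_lt_0_compat. apply Hw; lia.
           assert (0 < P n (X k0) * P n (X k0)) by (apply Rsqr_pos_lt; auto). auto.
      * exfalso. apply (no_lattice_roots q Hq a ltac:(lra) n (c n)).
        -- unfold c, cof. rewrite coef_n. lra.
        -- intros k hk. apply NNPP. intro hne. apply hno. exists k. split; auto.
           unfold P. replace (S (S N)) with (n + (S (S N) - n))%nat by lia. rewrite ev_tail; auto.
           intros j hj. unfold c, cof. apply coef_big; auto.
  - intros m n hm hn. rewrite Hjack. destruct (Nat.eqb_spec m n).
    + subst. reflexivity.
    + rewrite Horth by auto. destruct ca as [u v]. unfold Cmult, RtoC. simpl.
      apply injective_projections; simpl; ring.
Qed.
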